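(* Let $L_r^n\subset\mathbb{A}^n$ be the cone over $r$ points of $\mathbb{P}^{n-1}$ in general position, and let $d\ge2$ be the integer with $\binom{n+d-2}{d-1}<r\le\binom{n+d-1}{d}$. Then \[\dim_\k T^1_{-1}\ \ge\ \max\Big\{0,\ (n-1)r-n-\Big(r-\binom{n+d-2}{d-1}\Big)\Big(\binom{n+d-1}{d}-r\Big)\Big\},\] and if $r=\binom{n+d-1}{d}$ then equality holds, i.e. $\dim_\k T^1_{-1}=(n-1)\binom{n+d-1}{d}-n$.
   Context: Ground field $\k$ algebraically closed, characteristic $0$. A set of $r$ points in $\mathbb{P}^{n-1}$ is in general position if for every $\ell\ge1$ it imposes $\min(r,\binom{n+\ell-1}{\ell})$ independent conditions on forms of degree $\ell$. $T^1=\operatorname{Coker}\big(\Theta_n\otimes\mathcal{O}\to\operatorname{Hom}_{\mathcal{O}_n}(I,\mathcal{O})\big)$ for the homogeneous ideal $I$ of $L_r^n$ (all variables of weight $1$), graded so that $T^1_\ell$ is the image of homomorphisms sending each homogeneous generator of degree $q$ to an element of degree $q+\ell$. *)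

(* Defs.v *)
From HB Require Import structures.
From mathcomp Require Import all_boot all_order all_algebra.
From mathcomp Require Import mpoly.
Set Implicit Arguments. Unset Strict Implicit. Unset Printing Implicit Defensive.
Import Order.TTheory GRing.Theory Num.Theory.
Local Open Scope ring_scope.

Section T1.
Variables (F : fieldType) (n r : nat) (p : 'I_r -> 'I_n -> F).
(* p i = a representative vector in F^n of the i-th point of P^{n-1}. *)

Definition distinct_points : Prop :=
  (forall i, exists k, p i k != 0) /\
  (forall i j, i != j -> ~ exists c : F, forall k, p j k = c * p i k).

(* For every l >= 1 the points impose min(r, C(n+l-1,l)) independent conditions
   on forms of degree l, i.e. the evaluation map S_l -> F^r has full rank
   min(r, dim S_l): it is onto when r <= dim S_l and one-to-one when
   dim S_l <= r. *)
Definition general_position : Prop :=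
  forall l : nat, (1 <= l)%N ->
    ((r <= 'C(n + l - 1, l))%N ->
       forall v : 'I_r -> F, exists f : {mpoly F[n]},
         f \is l.-homog /\ forall i, f.@[p i] = v i) /\
    (('C(n + l - 1, l) <= r)%N ->
       forall f : {mpoly F[n]}, f \is l.-homog ->
         (forall i, f.@[p i] = 0) -> f = 0).

Definition Iq (q : nat) (f : {mpoly F[n]}) : Prop :=
  f \is q.-homog /\ forall i, f.@[p i] = 0.

(* A homogeneous S-module homomorphism I -> O = S/I of degree -1, given by
   representatives: phi f is a representative in S_{q-1} of the image of
   f in I_q (for q = 0, I_0 = 0 and the target (S/I)_{-1} = 0). *)
Definition hom_m1 (phi : {mpoly F[n]} -> {mpoly F[n]}) : Prop :=
  (forall q f, Iq q f -> phi f \is q.-1.-homog) /\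
  (forall q f g (a b : F), Iq q f -> Iq q g ->
     Iq q.-1 (phi (a *: f + b *: g) - (a *: phi f + b *: phi g))) /\
  (forall q f (j : 'I_n), Iq q f ->
     Iq q (phi ('X_j * f) - 'X_j * phi f)).

(* equality of two such homomorphisms as maps I -> S/I *)
Definition hom_eq (phi psi : {mpoly F[n]} -> {mpoly F[n]}) : Prop :=
  forall q f, Iq q f -> Iq q.-1 (phi f - psi f).

(* the degree -1 part of Theta_n (x) O: derivations sum_j c_j d/dx_j, c_j in F *)
Definition constDer (c : 'I_n -> F) (f : {mpoly F[n]}) : {mpoly F[n]} :=
  \sum_(j < n) c j *: mderiv j f.

(* phi is zero in T^1_{-1} = Coker(Theta (x) O -> Hom(I, O))_{-1} *)
Definition zero_in_T1 (phi : {mpoly F[n]} -> {mpoly F[n]}) : Prop :=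
  exists c : 'I_n -> F, hom_eq phi (constDer c).

Definition lincomb (N : nat) (a : 'I_N -> F)
  (phi : 'I_N -> {mpoly F[n]} -> {mpoly F[n]}) (f : {mpoly F[n]}) :=
  \sum_(k < N) a k *: phi k f.

Definition T1m1_dim_ge (N : nat) : Prop :=
  exists phi : 'I_N -> {mpoly F[n]} -> {mpoly F[n]},
    (forall k, hom_m1 (phi k)) /\
    forall a : 'I_N -> F, zero_in_T1 (lincomb a phi) -> forall k, a k = 0.

Definition T1m1_dim (N : nat) : Prop := T1m1_dim_ge N /\ ~ T1m1_dim_ge N.+1.
End T1.

(* Main.v *)
Require Import Defs.
From HB Require Import structures.
From mathcomp Require Import all_boot all_order all_algebra.
From mathcomp Require Import mpoly.
From mathcomp Require Import ring zify.
From Stdlib Require Import ClassicalEpsilon.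
Import Order.TTheory GRing.Theory Num.Theory.
Local Open Scope ring_scope.
Set Implicit Arguments. Unset Strict Implicit. Unset Printing Implicit Defensive.

Section Gen.
Variables (F : fieldType) (n : nat).
Local Notation N1 := n.+1.
Local Notation mp := {mpoly F[N1]}.

Definition Dw (w x : 'I_N1 -> F) (f : mp) : F := \sum_j w j * (f^`M(j)).@[x].

Lemma Dw_ext w1 w2 x f : (forall j, w1 j = w2 j) -> Dw w1 x f = Dw w2 x f.
Proof. by move=> h; apply: eq_bigr => j _; rewrite h. Qed.

Lemma DwD w x f g : Dw w x (f + g) = Dw w x f + Dw w x g.
Proof. by rewrite /Dw -big_split; apply: eq_bigr => j _; rewrite mderivD mevalD mulrDr. Qed.

Lemma DwZ w x c f : Dw w x (c *: f) = c * Dw w x f.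
Proof. by rewrite /Dw mulr_sumr; apply: eq_bigr => j _; rewrite mderivZ mevalZ mulrCA. Qed.

Lemma Dw0 w x : Dw w x 0 = 0.
Proof. by rewrite /Dw big1 // => j _; rewrite mderiv0 meval0 mulr0. Qed.

Lemma DwN w x f : Dw w x (- f) = - Dw w x f.
Proof. by rewrite -scaleN1r DwZ mulN1r. Qed.

Lemma DwB w x f g : Dw w x (f - g) = Dw w x f - Dw w x g.
Proof. by rewrite DwD DwN. Qed.

Lemma Dw_sum (I : Type) (s : seq I) (P : pred I) (G : I -> mp) w x :
  Dw w x (\sum_(i <- s | P i) G i) = \sum_(i <- s | P i) Dw w x (G i).
Proof.
elim/big_rec2: _ => [|i a b _ IH]; first by rewrite Dw0.
by rewrite DwD IH.
Qed.

Lemma DwM w x f g : Dw w x (f * g) = Dw w x f * g.@[x] + f.@[x] * Dw w x g.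
Proof.
rewrite /Dw mulr_suml mulr_sumr -big_split; apply: eq_bigr => j _.
by rewrite mderivM mevalD !mevalM mulrDr mulrA (mulrCA (w j)) mulrA.
Qed.

Lemma DwC w x c : Dw w x c%:MP = 0.
Proof. by rewrite /Dw big1 // => j _; rewrite mderivC meval0 mulr0. Qed.

Lemma DwX w x k : Dw w x 'X_k = w k.
Proof.
rewrite /Dw (bigD1 k) //= big1 => [|j njk].
  rewrite mderivX mnm1E eqxx.
  have ->: (U_(k) - U_(k) = 0 :> 'X_{1..N1})%MM by apply/mnmP => i; rewrite mnmBE subnn mnmE.
  by rewrite mpolyX0 scale1r meval1 mulr1 addr0.
by rewrite mderivX mnm1E eq_sym (negbTE njk) scale0r meval0 mulr0.
Qed.

Lemma Dw_w (a : F) w1 w2 x f :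
  Dw (fun j => a * w1 j + w2 j) x f = a * Dw w1 x f + Dw w2 x f.
Proof.
by rewrite /Dw mulr_sumr -big_split; apply: eq_bigr => j _; rewrite mulrDl mulrA.
Qed.

Lemma mevalConstDer c x f :
  (constDer c f).@[x] = Dw c x f.
Proof.
rewrite /constDer /Dw; elim/big_rec2: _ => [|j a b _ IH]; first by rewrite meval0.
by rewrite mevalD mevalZ IH.
Qed.

Lemma homogX j : ('X_j : mp) \is 1.-homog.
Proof. by rewrite dhomogX; apply/eqP; apply: mdeg1. Qed.

Lemma homog0 q : (0 : mp) \is q.-homog.
Proof. exact: dhomog0. Qed.

Lemma homogB q f g : f \is q.-homog -> g \is q.-homog -> (f - g : mp) \is q.-homog.
Proof. by move=> hf hg; rewrite rpredB. Qed.

Lemma homogD q f g : f \is q.-homog -> g \is q.-homog -> (f + g : mp) \is q.-homog.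
Proof. by move=> hf hg; rewrite rpredD. Qed.

Lemma homogZ q c f : f \is q.-homog -> (c *: f : mp) \is q.-homog.
Proof. by move=> hf; rewrite rpredZ. Qed.

Lemma homog_sum q (I : Type) (s : seq I) (P : pred I) (G : I -> mp) :
  (forall i, P i -> G i \is q.-homog) -> \sum_(i <- s | P i) G i \is q.-homog.
Proof. by move=> h; apply: rpred_sum. Qed.

Lemma homogXM q j f : f \is q.-homog -> ('X_j * f : mp) \is q.+1.-homog.
Proof. by move=> hf; have := dhomogM (homogX j) hf; rewrite add1n. Qed.

Lemma homog_0 f : (f : mp) \is 0.-homog -> f = (f@_0%MM)%:MP.
Proof.
move=> hf; apply/mpolyP => m; rewrite mcoeffC.
have [->|nm0] := eqVneq m 0%MM; first by rewrite mulr1.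
rewrite mulr0; apply: (dhomog_nemf_coeff hf).
by rewrite mdeg_eq0.
Qed.

Lemma homog_mdeg q (f : mp) m : f \is q.-homog -> m \in msupp f -> mdeg m = q.
Proof. by move=> /dhomogP hf /hf. Qed.

Lemma homog_deriv q j f : (f : mp) \is q.-homog -> f^`M(j) \is q.-1.-homog.
Proof.
move=> hf; apply/dhomogP => m; rewrite mcoeff_msupp mcoeff_mderiv => nz.
have : (m + U_(j))%MM \in msupp f.
  by rewrite mcoeff_msupp; apply: contraNneq nz => ->; rewrite mul0rn.
move/(homog_mdeg hf); rewrite mdegD mdeg1 addn1 => <-; by [].
Qed.

Lemma mnm_pos_split (m : 'X_{1..N1}) j : (0 < m j)%N -> m = (U_(j) + (m - U_(j)))%MM.
Proof.
move=> hj; apply/mnmP => i; rewrite mnmDE mnmBE mnm1E.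
have [<-|_] := eqVneq j i; last by rewrite subn0 add0n.
by rewrite add1n subn1 prednK.
Qed.

Lemma mdeg_pos (m : 'X_{1..N1}) : (0 < mdeg m)%N -> exists j, (0 < m j)%N.
Proof.
move=> h; case: (pickP (fun i => 0 < m i)%N) => [j hj|hn]; first by exists j.
move: h; rewrite mdegE big1 // => i _; move: (hn i) => /=.
by case: (m i).
Qed.

Lemma homog_decomp q f : (f : mp) \is q.+1.-homog ->
  exists g : 'I_N1 -> mp, (forall j, g j \is q.-homog) /\ f = \sum_j 'X_j * g j.
Proof.
move=> hf; rewrite {1}(mpolyE f).
have : {in msupp f, forall m, mdeg m = q.+1} by move=> m; apply: homog_mdeg.
elim: (msupp f) => [|m s IH] hs.
  by exists (fun _ => 0); split=> [j|]; [exact: homog0|rewrite big_nil big1 // => j _; rewrite mulr0].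
have [g [hg eqg]] := IH (fun m' hm' => hs m' (mem_behead (s := m :: s) hm')).
have hm : mdeg m = q.+1 by apply: hs; rewrite inE eqxx.
have [j0 hj0] : exists j, (0 < m j)%N by apply: mdeg_pos; rewrite hm.
exists (fun j => g j + (j == j0)%:R *: (f@_m *: 'X_[m - U_(j0)])); split.
  move=> j; apply: homogD => //; apply: homogZ; apply: homogZ.
  rewrite dhomogX; have := hm; rewrite {1}(mnm_pos_split hj0) mdegD mdeg1 add1n.
  by case=> /= ->.
rewrite big_cons eqg addrC; under [X in _ = X]eq_bigr => j _ do rewrite mulrDr.
rewrite big_split /=; congr (_ + _).
rewrite (bigD1 j0) //= big1 => [|j nj]; last by rewrite (negbTE nj) scale0r mulr0.
rewrite eqxx scale1r addr0 -scalerAr -mpolyXD -(mnm_pos_split hj0).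
by [].
Qed.

End Gen.

Section Pt.
Variables (F : fieldType) (n : nat).
Local Notation N1 := n.+1.
Local Notation mp := {mpoly F[N1]}.

Lemma meval_sumX (x : 'I_N1 -> F) (I : Type) (s : seq I) (P : pred I) (G : I -> mp) :
  (\sum_(i <- s | P i) G i).@[x] = \sum_(i <- s | P i) (G i).@[x].
Proof.
elim/big_rec2: _ => [|i a b _ IH]; first by rewrite meval0.
by rewrite mevalD IH.
Qed.

Lemma Euler q (f : mp) x : f \is q.-homog -> Dw x x f = q%:R * f.@[x].
Proof.
elim: q f => [|q IH] f hf.
  by rewrite (homog_0 hf) DwC mul0r.
have [g [hg ->]] := homog_decomp hf.
rewrite Dw_sum meval_sumX mulr_sumr; apply: eq_bigr => j _.
rewrite DwM DwX mevalM mevalXU (IH _ (hg j)) -natr1.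
by rewrite mulrDl mul1r addrC mulrCA.
Qed.

Variables (P : 'I_N1 -> F) (k : 'I_N1).

Definition ell j : mp := P k *: 'X_j - P j *: 'X_k.

Lemma ell_homog j : ell j \is 1.-homog.
Proof. by apply: homogB; apply: homogZ; apply: homogX. Qed.

Lemma ell_eval j x : (ell j).@[x] = P k * x j - P j * x k.
Proof. by rewrite /ell mevalB !mevalZ !mevalXU. Qed.

Lemma ell_P j : (ell j).@[P] = 0.
Proof. by rewrite ell_eval mulrC subrr. Qed.

Lemma Dw_ell w x j : Dw w x (ell j) = P k * w j - P j * w k.
Proof. by rewrite /ell DwB !DwZ !DwX. Qed.

Lemma ell_kk : ell k = 0.
Proof. by rewrite /ell subrr. Qed.

Lemma ident1 (g : 'I_N1 -> mp) :
  P k *: (\sum_j 'X_j * g j) = 'X_k * (\sum_j P j *: g j) + \sum_j ell j * g j.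
Proof.
rewrite mulr_sumr -big_split scaler_sumr; apply: eq_bigr => j _ /=.
rewrite /ell -!mul_mpolyC; ring.
Qed.

Lemma taylor1 q (f : mp) : f \is q.+1.-homog -> f.@[P] = 0 ->
  exists A : 'I_N1 -> mp, (forall j, A j \is q.-homog) /\
    P k ^+ q.+1 *: f = \sum_j ell j * A j.
Proof.
elim: q f => [|q IH] f hf hP.
  have [g [hg eqf]] := homog_decomp hf.
  exists g; split => //; rewrite expr1 eqf ident1.
  set G := \sum_j _ *: _.
  have hG : G \is 0.-homog by apply: homog_sum => j _; apply: homogZ.
  have : G.@[P] = 0.
    rewrite -hP eqf /G !meval_sumX; apply: eq_bigr => j _.
    by rewrite mevalZ mevalM mevalXU.
  by rewrite (homog_0 hG) mevalC => ->; rewrite mulr0 add0r.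
have [g [hg eqf]] := homog_decomp hf.
set G := \sum_j P j *: g j.
have hG : G \is q.+1.-homog by apply: homog_sum => j _; apply: homogZ.
have GP : G.@[P] = 0.
  rewrite -hP eqf /G !meval_sumX; apply: eq_bigr => j _.
  by rewrite mevalZ mevalM mevalXU.
have [A' [hA' eqA']] := IH G hG GP.
exists (fun j => 'X_k * A' j + P k ^+ q.+1 *: g j); split.
  move=> j; apply: homogD; first exact: homogXM.
  by apply: homogZ.
rewrite exprSr -scalerA eqf ident1 -/G scalerDr scalerAr eqA'.
rewrite scaler_sumr mulr_sumr -big_split; apply: eq_bigr => j _ /=.
rewrite -!mul_mpolyC; ring.
Qed.

End Pt.

Section LinAlg.
Variables (F : fieldType) (vT : vectType F).

Definition compl (U : {vspace vT}) : 'End(vT) := (\1 - projv U)%VF.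

Lemma complE U x : compl U x = x - projv U x.
Proof. by rewrite /compl add_lfunE opp_lfunE id_lfunE. Qed.

Lemma compl_ker U : lker (compl U) = U.
Proof.
apply/vspaceP => x; rewrite memv_ker complE subr_eq0.
apply/eqP/idP => [->|hx]; first exact: memv_proj.
by rewrite projv_id.
Qed.

Lemma compl_img U : \dim (limg (compl U)) = (\dim (fullv : {vspace vT}) - \dim U)%N.
Proof.
have := limg_ker_dim (compl U) fullv; rewrite capfv compl_ker => <-.
by rewrite addKn.
Qed.

Lemma dim_limg_le (aT : vectType F) (f : 'Hom(aT, vT)) :
  (\dim (limg f) <= \dim (fullv : {vspace aT}))%N.
Proof. by have := limg_ker_dim f fullv => <-; rewrite leq_addl. Qed.

Lemma dim_limg_comp (aT : vectType F) (f : 'Hom(aT, vT)) (g : 'End(vT)) :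
  (\dim (limg (g \o f)%VF) <= \dim (limg g))%N.
Proof. by rewrite limg_comp; apply: dimvS; apply: limgS; apply: subvf. Qed.

End LinAlg.

Section Upper.
Variables (F : fieldType) (vT : vectType F) (N : nat) (V : 'I_N.+1 -> vT)
  (W : {vspace vT}).

Definition Tf (a : 'rV[F]_N.+1) : vT := \sum_k a 0 k *: V k.
Fact Tf_lin : linear Tf.
Proof.
move=> c x y; rewrite /Tf scaler_sumr -big_split; apply: eq_bigr => k _.
by rewrite !mxE scalerDl scalerA.
Qed.
HB.instance Definition _ := GRing.isLinear.Build F 'rV[F]_N.+1 vT _ Tf Tf_lin.
Definition Tl : 'Hom('rV[F]_N.+1, vT) := linfun Tf.

Lemma U2 : (\dim (fullv : {vspace vT}) - \dim W < N.+1)%N ->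
  exists a : 'I_N.+1 -> F, (exists k, a k != 0) /\ \sum_k a k *: V k \in W.
Proof.
move=> hN; set G := (compl W \o Tl)%VF.
have hk := limg_ker_dim G fullv; rewrite capfv dimvf /= dim_matrix mul1r in hk.
have hG : (\dim (limg G) < N.+1)%N.
  apply: leq_ltn_trans (dim_limg_comp _ _) _; rewrite compl_img; exact: hN.
have : lker G != 0%VS.
  rewrite -dimv_eq0; apply/eqP => h0; move: hk; rewrite h0 add0n => hk.
  by move: hG; rewrite hk ltnn.
rewrite -vpick0 => nz; set a := vpick (lker G) in nz.
have : a \in lker G by exact: memv_pick.
rewrite memv_ker comp_lfunE -memv_ker compl_ker /Tl lfunE /= /Tf => hW.
exists (fun k => a 0 k); split => //.
apply/existsP; apply: contraNT nz => /existsPn h; apply/eqP/rowP => k.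
by rewrite mxE; apply/eqP; move: (h k); rewrite negbK.
Qed.

End Upper.

Section PickInd.
Variables (F : fieldType) (vT : vectType F) (U0 W : {vspace vT}) (N : nat).

Lemma pickind : (N <= \dim U0 - \dim W)%N ->
  exists V : 'I_N -> vT, (forall k, V k \in U0) /\
    forall a : 'I_N -> F, \sum_k a k *: V k \in W -> forall k, a k = 0.
Proof.
move=> hN; set U1 := (U0 :\: W)%VS.
have hdim : (N <= \dim U1)%N.
  apply: leq_trans hN _; have := dimv_cap_compl U0 W => <-.
  by rewrite leq_subLR leq_add2r dimvS // capvSr.
set X := vbasis U1.
have XU1 i : (i < \dim U1)%N -> X`_i \in U1.
  by move=> hi; apply: vbasis_mem; apply: mem_nth; rewrite size_tuple.
exists (fun k => X`_k); split.
  move=> k; have := XU1 k (leq_trans (ltn_ord k) hdim).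
  by apply: subvP; apply: diffvSl.
move=> a hW.
have hU1 : \sum_k a k *: X`_k \in U1.
  by apply: memv_suml => k _; apply: memvZ; apply: XU1; apply: leq_trans hdim.
have h0 : \sum_k a k *: X`_k = 0.
  apply/eqP; rewrite -memv0 -(capv_diff U0 W); exact/memv_capP.
pose A (m : nat) : F := if insub m is Some k then a k else 0.
have hA k : a k = A k by rewrite /A valK.
have e1 : \sum_(k < N) a k *: X`_k = \sum_(i < \dim U1) A i *: X`_i.
  rewrite (eq_bigr (fun k : 'I_N => A k *: X`_k)) => [|k _]; last by rewrite hA.
  rewrite (big_ord_widen _ (fun m => A m *: X`_m) hdim) big_mkcond /=.
  apply: eq_bigr => i _; case: ifP => // hi.
  by rewrite /A insubF ?scale0r // hi.
have hsum : \sum_(i < \dim U1) A i *: X`_i = 0 by rewrite -e1.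
have /freeP hfree := basis_free (vbasisP U1).
move=> k; rewrite hA.
have := hfree (fun i => A i) hsum (Ordinal (leq_trans (ltn_ord k) hdim)).
by [].
Qed.

End PickInd.

Lemma bin_mono m a b : (a <= b)%N -> ('C(m + a, a) <= 'C(m + b, b))%N.
Proof.
elim: b => [|b IH]; first by rewrite leqn0 => /eqP ->.
rewrite leq_eqVlt => /orP [/eqP -> //| hab].
apply: leq_trans (IH hab) _.
by rewrite addnS binS leq_addl.
Qed.

Section Main.
Variables (F : fieldType) (n r : nat) (p : 'I_r -> 'I_n.+1 -> F) (d : nat).
Local Notation N1 := n.+1.
Local Notation mp := {mpoly F[N1]}.
Hypotheses (hpts : distinct_points p) (hgp : general_position p)
  (hd : (2 <= d)%N) (hr1 : ('C(N1 + d - 2, d - 1) < r)%N)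
  (hr2 : (r <= 'C(N1 + d - 1, d))%N).

Local Notation Iq := (Iq p).

Lemma Iq_0 q : Iq q 0.
Proof. by split; [exact: homog0| move=> i; rewrite meval0]. Qed.

Lemma Iq_lin q a b f g : Iq q f -> Iq q g -> Iq q (a *: f + b *: g).
Proof.
move=> [hf vf] [hg vg]; split; first by apply: homogD; apply: homogZ.
by move=> i; rewrite mevalD !mevalZ vf vg !mulr0 addr0.
Qed.

Lemma Iq_mul e q (g f : mp) : g \is e.-homog -> Iq q f -> Iq (e + q) (g * f).
Proof.
move=> hg [hf vf]; split; first exact: dhomogM.
by move=> i; rewrite mevalM vf mulr0.
Qed.

Lemma Iq_X j q f : Iq q f -> Iq q.+1 ('X_j * f).
Proof. by move=> h; have := Iq_mul (homogX F j) h; rewrite add1n. Qed.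

Lemma r_pos : (0 < r)%N.
Proof. exact: leq_ltn_trans hr1. Qed.

Lemma homog01 (g : mp) q1 q2 : q1 != q2 -> g \is q1.-homog -> g \is q2.-homog -> g = 0.
Proof.
move=> nq h1 h2; apply/eqP; apply: contraNT nq => nz.
by apply/eqP; apply: (dhomog_uniq nz h1 h2).
Qed.

Lemma Iq_small q f : (q < d)%N -> Iq q f -> f = 0.
Proof.
move=> hq [hf vf]; move: hq hf; case: q => [|q] hq hf.
  have e0 := homog_0 hf.
  have := vf (Ordinal r_pos).
  rewrite e0 mevalC => h0; rewrite {1}e0 h0 mcoeffC mul0r; by apply/eqP; rewrite mpolyC_eq0.
have [_ inj] := hgp (ltn0Sn q).
apply: inj => //.
apply: leq_trans (ltnW hr1).
have -> : (N1 + q.+1 - 1 = n + q.+1)%N by rewrite addSn subn1.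
have -> : (N1 + d - 2 = n + (d - 1))%N.
  by lia.
by apply: bin_mono; lia.
Qed.

Lemma interp l (v : 'I_r -> F) : (d <= l)%N ->
  exists g : mp, g \is l.-homog /\ forall i, g.@[p i] = v i.
Proof.
move=> hl; have l1 : (1 <= l)%N by apply: leq_trans hl; apply: ltnW.
have [onto _] := hgp l1.
apply: onto; apply: leq_trans hr2 _.
have -> : (N1 + l - 1 = n + l)%N by rewrite addSn subn1.
have -> : (N1 + d - 1 = n + d)%N by rewrite addSn subn1.
exact: bin_mono.
Qed.

Section Hom.
Variable phi : mp -> mp.
Hypothesis hphi : hom_m1 p phi.

Lemma hm0 : phi 0 = 0.
Proof.
have [h1 _] := hphi.
by apply: (@homog01 _ 0 1) => //; [exact: (h1 1%N 0 (Iq_0 1))| exact: (h1 2%N 0 (Iq_0 2))].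
Qed.

Lemma hmlin q a b f g i : Iq q f -> Iq q g ->
  (phi (a *: f + b *: g)).@[p i] = a * (phi f).@[p i] + b * (phi g).@[p i].
Proof.
move=> hf hg; have [_ [h2 _]] := hphi.
have [_ v] := h2 q f g a b hf hg; move: (v i).
by rewrite mevalB mevalD !mevalZ => /eqP; rewrite subr_eq0 => /eqP.
Qed.

Lemma hmZ q a f i : Iq q f -> (phi (a *: f)).@[p i] = a * (phi f).@[p i].
Proof.
move=> hf; have := hmlin a 0 i hf hf.
by rewrite scale0r addr0 mul0r addr0.
Qed.

Lemma hmD q f g i : Iq q f -> Iq q g ->
  (phi (f + g)).@[p i] = (phi f).@[p i] + (phi g).@[p i].
Proof. by move=> hf hg; have := hmlin 1 1 i hf hg; rewrite !scale1r !mul1r. Qed.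

Lemma hmsum q (I : Type) (s : seq I) (P : pred I) (G : I -> mp) i :
  (forall j, P j -> Iq q (G j)) ->
  (phi (\sum_(j <- s | P j) G j)).@[p i] = \sum_(j <- s | P j) (phi (G j)).@[p i].
Proof.
move=> hG.
pose K (x : mp) (y : F) := Iq q x /\ (phi x).@[p i] = y.
suff [] : K (\sum_(j <- s | P j) G j) (\sum_(j <- s | P j) (phi (G j)).@[p i]) by [].
elim/big_rec2: _ => [|j x y Pj [hx hy]].
  by split; [exact: Iq_0| rewrite hm0 meval0].
split; first by have := Iq_lin 1 1 (hG j Pj) hx; rewrite !scale1r.
by rewrite (hmD i (hG j Pj) hx) hy.
Qed.

Lemma hmX q j f i : Iq q f -> (phi ('X_j * f)).@[p i] = p i j * (phi f).@[p i].
Proof.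
move=> hf; have [_ [_ h3]] := hphi.
have [_ v] := h3 q f j hf; move: (v i).
by rewrite mevalB mevalM mevalXU => /eqP; rewrite subr_eq0 => /eqP.
Qed.

Lemma hmM e q (g f : mp) i : g \is e.-homog -> Iq q f ->
  (phi (g * f)).@[p i] = g.@[p i] * (phi f).@[p i].
Proof.
elim: e g => [|e IH] g hg hf.
  by rewrite (homog_0 hg) mul_mpolyC (hmZ _ _ hf) mevalC.
have [G [hG ->]] := homog_decomp hg.
rewrite mulr_suml (hmsum (q := (e + q).+1)); last first.
  by move=> j _; rewrite -mulrA; apply: Iq_X; apply: Iq_mul.
rewrite meval_sumX mulr_suml; apply: eq_bigr => j _.
rewrite -mulrA (hmX _ _ (Iq_mul (hG j) hf)) (IH _ (hG j) hf).
by rewrite (mevalM (p i) 'X_j (G j)) mevalXU mulrA.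
Qed.

End Hom.

Lemma pt_nz i : exists k, p i k != 0.
Proof. by have [h _] := hpts; apply: h. Qed.

Lemma pt_h i : exists h : mp, h \is d.-homog /\ forall m, h.@[p m] = (m == i)%:R.
Proof. exact: interp. Qed.

Lemma Fj_Iq i k (h : mp) j : h \is d.-homog -> (forall m, h.@[p m] = (m == i)%:R) ->
  Iq d.+1 (ell (p i) k j * h).
Proof.
move=> hh vh; split; first by have := dhomogM (ell_homog (p i) k j) hh; rewrite add1n.
move=> m; rewrite mevalM vh; have [->|_] := eqVneq m i; first by rewrite ell_P mul0r.
by rewrite mulr0.
Qed.

Lemma tangent i (u : 'I_N1 -> F) : (forall q f, Iq q f -> Dw u (p i) f = 0) ->
  exists lam, forall j, u j = lam * p i j.
Proof.
move=> H; have [k hk] := pt_nz i; have [h [hh vh]] := pt_h i.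
exists (u k / p i k) => j.
have := H _ _ (Fj_Iq k j hh vh).
rewrite DwM Dw_ell vh eqxx ell_P mul0r addr0 mulr1 => /eqP; rewrite subr_eq0 => /eqP e.
apply: (mulfI hk); rewrite e; field; exact: hk.
Qed.

Lemma U1 i phi : hom_m1 p phi ->
  exists w : 'I_N1 -> F, forall q f, Iq q f -> (phi f).@[p i] = Dw w (p i) f.
Proof.
move=> hphi; have [k hk] := pt_nz i; have [h [hh vh]] := pt_h i.
set P := p i.
pose w := fun j => (phi (ell P k j * h)).@[P] / P k.
exists w => q f hf; case: q hf => [|q] hf.
  by rewrite (Iq_small _ hf) ?(hm0 hphi) ?meval0 ?Dw0 // ltnW.
have [A [hA eqA]] := taylor1 (P := P) k hf.1 (hf.2 i).
have hF j : Iq d.+1 (ell P k j * h) by exact: Fj_Iq.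
have key1 : P k ^+ q.+1 * (phi f).@[P] =
    \sum_j (A j).@[P] * (phi (ell P k j * h)).@[P].
  have e1 : (P k ^+ q.+1 *: h) * f = \sum_j A j * (ell P k j * h).
    rewrite -scalerAl scalerAr eqA mulr_sumr; apply: eq_bigr => j _; ring.
  have := hmM hphi i (homogZ (P k ^+ q.+1) hh) hf.
  rewrite e1 (hmsum hphi (q := (q + d.+1)%N)); last by move=> j _; apply: Iq_mul.
  rewrite mevalZ vh eqxx mulr1 => <-; apply: eq_bigr => j _.
  by rewrite (hmM hphi i (hA j) (hF j)).
have key2 : P k ^+ q.+1 * Dw w P f = \sum_j (A j).@[P] * (P k * w j - P j * w k).
  rewrite -DwZ eqA Dw_sum; apply: eq_bigr => j _.
  by rewrite DwM Dw_ell ell_P mul0r addr0 mulrC.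
have wk : w k = 0 by rewrite /w ell_kk mul0r (hm0 hphi) meval0 mul0r.
apply: (mulfI (expf_neq0 q.+1 hk)); rewrite key1 key2; apply: eq_bigr => j _.
by rewrite wk mulr0 subr0 /w [P k * _]mulrC divfK.
Qed.

Definition Dv (v : 'M[F]_(r, N1)) i (f : mp) := Dw (fun j => v i j) (p i) f.

Lemma U1all phi : hom_m1 p phi ->
  exists v : 'M[F]_(r, N1), forall q f, Iq q f -> forall i, (phi f).@[p i] = Dv v i f.
Proof.
move=> hphi; have [W HW] := fin_all_exists (fun i => U1 i hphi).
exists (\matrix_(i, j) W i j) => q f hf i; rewrite (HW i q f hf) /Dv.
by apply: Dw_ext => j; rewrite mxE.
Qed.

Definition Hv v := forall f, Iq d f ->
  exists g : mp, g \is d.-1.-homog /\ forall i, g.@[p i] = Dv v i f.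
Definition Pgood v f (g : mp) := forall q, Iq q f ->
  g \is q.-1.-homog /\ forall i, g.@[p i] = Dv v i f.
Definition phiv v f := epsilon (inhabits (0 : mp)) (Pgood v f).

Lemma Dv_lin v i a b f g : Dv v i (a *: f + b *: g) = a * Dv v i f + b * Dv v i g.
Proof. by rewrite /Dv DwD !DwZ. Qed.

Lemma Dv_X v i j f : f.@[p i] = 0 -> Dv v i ('X_j * f) = p i j * Dv v i f.
Proof. by move=> h; rewrite /Dv DwM DwX h mulr0 add0r mevalXU. Qed.

Lemma phiv_spec v : Hv v -> forall q f, Iq q f ->
  phiv v f \is q.-1.-homog /\ forall i, (phiv v f).@[p i] = Dv v i f.
Proof.
move=> HV q f hf; suff : Pgood v f (phiv v f) by move/(_ q hf).
apply: epsilon_spec.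
have [->|nz] := eqVneq f 0.
  exists 0 => q' _; split; [exact: homog0| by move=> i; rewrite meval0 /Dv Dw0].
have hq : (d <= q)%N.
  rewrite leqNgt; apply/negP => lt; move/negP: nz; apply.
  by rewrite (Iq_small lt hf).
have [g [hg vg]] : exists g : mp, g \is q.-1.-homog /\ forall i, g.@[p i] = Dv v i f.
  move: hq; rewrite leq_eqVlt => /orP [/eqP eqq|ltq].
    by rewrite -eqq; apply: HV; rewrite eqq.
  by apply: interp; rewrite -ltnS prednK // (leq_ltn_trans _ ltq).
exists g => q' hq'.
by have eq := dhomog_uniq nz hq'.1 hf.1; rewrite eq.
Qed.

Lemma phiv0 v : Hv v -> phiv v 0 = 0.
Proof.
move=> HV; apply: (@homog01 _ 0 1) => //.
  exact: (phiv_spec HV (Iq_0 1)).1.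
exact: (phiv_spec HV (Iq_0 2)).1.
Qed.

Lemma phiv_hom v : Hv v -> hom_m1 p (phiv v).
Proof.
move=> HV; split; [|split].
- by move=> q f hf; exact: (phiv_spec HV hf).1.
- move=> q f g a b hf hg; have hfg := Iq_lin a b hf hg.
  have [s1 v1] := phiv_spec HV hfg; have [s2 v2] := phiv_spec HV hf.
  have [s3 v3] := phiv_spec HV hg.
  split; first by apply: homogB => //; apply: homogD; apply: homogZ.
  by move=> i; rewrite mevalB mevalD !mevalZ v1 v2 v3 Dv_lin subrr.
- move=> q f j hf; have [->|nz] := eqVneq f 0.
    by rewrite mulr0 phiv0 // mulr0 subrr; exact: Iq_0.
  have hq : (0 < q)%N.
    rewrite lt0n; apply/negP => /eqP q0; move/negP: nz; apply.
    by rewrite (@Iq_small q f) // q0; apply: leq_trans hd.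
  have hX := Iq_X j hf.
  have [s1 v1] := phiv_spec HV hX; have [s2 v2] := phiv_spec HV hf.
  split.
    by apply: homogB => //; rewrite -[q in q.-homog](prednK hq); apply: homogXM.
  by move=> i; rewrite mevalB mevalM mevalXU v1 v2 Dv_X ?subrr //; exact: hf.2.
Qed.



Definition Wfun (x : 'rV[F]_r * 'rV[F]_N1) : 'M[F]_(r, N1) :=
  \matrix_(i, j) (x.1 0 i * p i j + x.2 0 j).
Fact Wfun_lin : linear Wfun.
Proof. by move=> c x y; apply/matrixP => i j; rewrite !mxE /=; ring. Qed.
HB.instance Definition _ := GRing.isLinear.Build F ('rV[F]_r * 'rV[F]_N1)%type
  'M[F]_(r, N1) _ Wfun Wfun_lin.
Definition Wl : 'Hom(('rV[F]_r * 'rV[F]_N1)%type, 'M[F]_(r, N1)) := linfun Wfun.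
Definition Wsp := limg Wl.

Lemma memW M : M \in Wsp ->
  exists lam : 'I_r -> F, exists c : 'I_N1 -> F, forall i j, M i j = lam i * p i j + c j.
Proof.
case/memv_imgP => x _ ->; exists (fun i => x.1 0 i), (fun j => x.2 0 j) => i j.
by rewrite lfunE /= mxE.
Qed.

Lemma inW (lam : 'I_r -> F) (c : 'I_N1 -> F) :
  \matrix_(i, j) (lam i * p i j + c j) \in Wsp.
Proof.
apply/memv_imgP; exists (\row_i lam i, \row_j c j); first exact: memvf.
by rewrite lfunE /=; apply/matrixP => i j; rewrite !mxE.
Qed.

Lemma dim_pair : \dim (fullv : {vspace ('rV[F]_r * 'rV[F]_N1)%type}) = (r + N1)%N.
Proof.
rewrite dimvf; change (dim 'rV[F]_r + dim 'rV[F]_N1 = r + N1)%N.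
by rewrite !dim_matrix !mul1r.
Qed.

Lemma dim_M : \dim (fullv : {vspace 'M[F]_(r, N1)}) = (r * N1)%N.
Proof. by rewrite dimvf /= dim_matrix. Qed.

Lemma dimW_le : (\dim Wsp <= r + N1)%N.
Proof. by rewrite -dim_pair; apply: dim_limg_le. Qed.

Lemma r_ge2 : (1 < r)%N.
Proof. apply: leq_ltn_trans hr1; rewrite bin_gt0; lia. Qed.

Lemma dimW : \dim Wsp = (r + N1)%N.
Proof.
have hk := limg_ker_dim Wl fullv; rewrite capfv dim_pair in hk.
suff e0 : lker Wl = 0%VS by rewrite e0 dimv0 add0n in hk.
apply/eqP; rewrite -subv0; apply/subvP => x; rewrite memv_ker memv0 lfunE /= => /eqP hx.
have hx' i j : x.1 0 i * p i j + x.2 0 j = 0.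
  by have := congr1 (fun M : 'M[F]_(r, N1) => M i j) hx; rewrite !mxE.
pose i0 : 'I_r := Ordinal r_pos; pose i1 : 'I_r := Ordinal r_ge2.
have x0 : x.1 0 i0 = 0.
  apply/eqP; apply/negP => /negP nz.
  have [_ dist] := hpts; apply: (dist i1 i0) => //.
  exists (x.1 0 i1 / x.1 0 i0) => j.
  apply: (mulfI nz); rewrite mulrA (mulrC (x.1 0 i0) (_ / _)) divfK //.
  by apply: (addIr (x.2 0 j)); rewrite (hx' i0 j) (hx' i1 j).
have x2 j : x.2 0 j = 0 by have := hx' i0 j; rewrite x0 mul0r add0r.
have x1 i : x.1 0 i = 0.
  have [k hpk] := pt_nz i; have := hx' i k; rewrite x2 addr0 => /eqP.
  by rewrite mulf_eq0 (negbTE hpk) orbF => /eqP.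
case: x hx hx' x0 x2 x1 => a b /= _ _ _ x2 x1.
have -> : a = 0 by apply/rowP => j; rewrite mxE x1.
have -> : b = 0 by apply/rowP => j; rewrite mxE x2.
by [].
Qed.

Definition evf q (x : dhomog N1 F q) : 'rV[F]_r := \row_i (val x).@[p i].
Fact evf_lin q : linear (@evf q).
Proof. by move=> c x y; apply/rowP => i; rewrite !mxE /= mevalD mevalZ. Qed.
HB.instance Definition _ q := GRing.isLinear.Build F (dhomog N1 F q) 'rV[F]_r _
  (@evf q) (@evf_lin q).
Definition evl q : 'Hom(dhomog N1 F q, 'rV[F]_r) := linfun (@evf q).

Definition C1' := 'C(d.-1 + n, d.-1).
Definition C2' := 'C(d + n, d).

Lemma dimE : \dim (limg (evl d.-1)) = C1'.
Proof.
have hk := limg_ker_dim (evl d.-1) fullv; rewrite capfv dimvf in hk.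
suff e0 : lker (evl d.-1) = 0%VS by rewrite e0 dimv0 add0n in hk.
apply/eqP; rewrite -subv0; apply/subvP => x; rewrite memv_ker memv0 lfunE /= => /eqP hx.
have d1 : (1 <= d.-1)%N by lia.
have [_ inj] := hgp d1.
have : val x = 0.
  apply: inj.
  - apply: ltnW; apply: leq_ltn_trans hr1.
    have -> : (N1 + d.-1 - 1 = N1 + d - 2)%N by lia.
    by rewrite subn1.
  - exact: dhomog_is_dhomog.
  - by move=> i; have := congr1 (fun M : 'rV[F]_r => M 0 i) hx; rewrite !mxE.
by move=> h0; apply/eqP; apply/val_inj.
Qed.

Lemma dimK : \dim (lker (evl d)) = (C2' - r)%N.
Proof.
have hk := limg_ker_dim (evl d) fullv; rewrite capfv dimvf in hk.
suff e1 : limg (evl d) = fullv.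
  rewrite e1 dimvf /= dim_matrix mul1r in hk; rewrite /C2'.
  change (\dim (lker (evl d)) = (dim (dhomog N1 F d) - r)%N).
  by rewrite -hk addnK.
apply/eqP; rewrite eqEsubv subvf /=; apply/subvP => y _.
have [g [hg vg]] := interp (fun i => y 0 i) (leqnn d).
apply/memv_imgP; exists (DHomog hg); first exact: memvf.
by rewrite lfunE /=; apply/rowP => i; rewrite !mxE vg.
Qed.

Lemma Dw_lin_w (c : F) (v w : 'M[F]_(r, N1)) i x f :
  Dw (fun j => (c *: v + w) i j) x f = c * Dw (fun j => v i j) x f + Dw (fun j => w i j) x f.
Proof.
rewrite -Dw_w; apply: Dw_ext => j; by rewrite !mxE.
Qed.

Definition Psif (f : mp) (v : 'M[F]_(r, N1)) : 'rV[F]_r := \row_i Dv v i f.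
Fact Psif_lin f : linear (Psif f).
Proof. by move=> c v w; apply/rowP => i; rewrite !mxE /Dv Dw_lin_w. Qed.
HB.instance Definition _ f := GRing.isLinear.Build F 'M[F]_(r, N1) 'rV[F]_r _
  (Psif f) (@Psif_lin f).
Definition Psil f : 'Hom('M[F]_(r, N1), 'rV[F]_r) := linfun (Psif f).

Definition Esp := limg (evl d.-1).
Definition PiE := compl Esp.

Definition V0 (s : seq mp) : {vspace 'M[F]_(r, N1)} :=
  foldr (fun f U => U :&: lker (PiE \o Psil f))%VS fullv s.

Lemma dimV0 s : (r * N1 <= \dim (V0 s) + size s * (r - C1'))%N.
Proof.
elim: s => [|f s IH] /=; first by rewrite dim_M mul0n addn0.
set U := V0 s; set L := lker (PiE \o Psil f)%VF.
have h1 := dimv_sum_cap U L.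
have h2 : (\dim (U + L) <= r * N1)%N by rewrite -dim_M; apply: dimvS; apply: subvf.
have h3 : (\dim L + \dim (limg (PiE \o Psil f)%VF) = r * N1)%N.
  by rewrite -dim_M -(limg_ker_dim (PiE \o Psil f)%VF fullv) capfv.
have h4 : (\dim (limg (PiE \o Psil f)%VF) <= r - C1')%N.
  apply: leq_trans (dim_limg_comp _ _) _; rewrite /PiE compl_img dimE dimvf /= dim_matrix mul1r.
  by [].
rewrite mulSn; move: IH h1 h2 h3 h4.
set X := (size s * (r - C1'))%N; set Y := (r - C1')%N; set R := (r * N1)%N.
move: (\dim U) (\dim L) (\dim (U + L)) (\dim (U :&: L)) (\dim (limg (PiE \o Psil f)%VF)).
lia.
Qed.

Lemma memV0 s v f : v \in V0 s -> f \in s -> Psil f v \in Esp.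
Proof.
elim: s => [|g s IH] //= /memv_capP [hv hL]; rewrite inE => /orP [/eqP ->|hf].
  by move: hL; rewrite memv_ker comp_lfunE -memv_ker /PiE compl_ker.
exact: IH.
Qed.

Lemma Psif_sum (I : Type) (s : seq I) (P : pred I) (c : I -> F) (g : I -> mp) v :
  Psif (\sum_(t <- s | P t) c t *: g t) v = \sum_(t <- s | P t) c t *: Psif (g t) v.
Proof.
apply/rowP => i; rewrite !mxE summxE /Dv Dw_sum; apply: eq_bigr => t _.
by rewrite DwZ !mxE.
Qed.

Lemma V0_Hv_dummy : True. Proof. by []. Qed.

Lemma V0_Hv v : v \in V0 (map val (vbasis (lker (evl d)))) -> Hv v.
Proof.
move=> hv f hf; set K := lker (evl d).
pose x : dhomog N1 F d := DHomog hf.1.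
have hxK : x \in K.
  by rewrite memv_ker lfunE /=; apply/eqP/rowP => i; rewrite !mxE /= (hf.2 i).
have ex := coord_vbasis hxK.
have hE : Psil f v \in Esp.
  have -> : f = val x by [].
  have hval : val (\sum_(i < \dim K) coord (vbasis K) i x *: (vbasis K)`_i) =
      \sum_(i < \dim K) coord (vbasis K) i x *: val (vbasis K)`_i.
    by elim/big_rec2: _ => [|i a b _ <-].
  rewrite ex lfunE /= hval Psif_sum; apply: memv_suml => t _; apply: memvZ.
  rewrite -lfunE; apply: (memV0 hv); apply: map_f; apply: mem_nth.
  by rewrite size_tuple.
case/memv_imgP: hE => y _ hy.
exists (val y); split; first exact: dhomog_is_dhomog.
move=> i; have := congr1 (fun M : 'rV[F]_r => M 0 i) hy.
by rewrite !lfunE /= !mxE.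
Qed.

Lemma Dw_lincomb (N : nat) (a : 'I_N -> F) (V : 'I_N -> 'M[F]_(r, N1)) i x f :
  Dw (fun j => (\sum_k a k *: V k) i j) x f = \sum_k a k * Dw (fun j => V k i j) x f.
Proof.
rewrite /Dw; under eq_bigr do rewrite summxE mulr_suml.
rewrite exchange_big /=; apply: eq_bigr => k _; rewrite mulr_sumr.
by apply: eq_bigr => j _; rewrite mxE mulrA.
Qed.

Lemma Dw_sub w1 w2 x (f : mp) : Dw (fun j => w1 j - w2 j) x f = Dw w1 x f - Dw w2 x f.
Proof. by rewrite /Dw -sumrB; apply: eq_bigr => j _; rewrite mulrBl. Qed.

Definition Nlb := (r * N1 - (C2' - r) * (r - C1') - (r + N1))%N.

Lemma LB : T1m1_dim_ge p Nlb.
Proof.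
set s := map val (vbasis (lker (evl d))).
have hs : size s = (C2' - r)%N by rewrite size_map size_tuple dimK.
have hV0 := dimV0 s; rewrite hs in hV0.
have hN : (Nlb <= \dim (V0 s) - \dim Wsp)%N.
  have := dimW_le; rewrite /Nlb; lia.
have [V [hV indep]] := pickind hN.
exists (fun k => phiv (V k)); split.
  by move=> k; apply: phiv_hom; apply: V0_Hv; apply: hV.
move=> a [c hc]; apply: indep.
set M := \sum_k a k *: V k.
have hrow i : exists lam, forall j, M i j - c j = lam * p i j.
  apply: tangent => q f hf; have [_ vz] := hc q f hf.
  rewrite Dw_sub Dw_lincomb -[RHS](vz i) /lincomb mevalB meval_sumX mevalConstDer.
  congr (_ - _); apply: eq_bigr => k _.
  by rewrite mevalZ ((phiv_spec (V0_Hv (hV k)) hf).2 i).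
have [lam hlam] := fin_all_exists hrow.
have -> : M = \matrix_(i, j) (lam i * p i j + c j).
  by apply/matrixP => i j; rewrite mxE -hlam subrK.
exact: inW.
Qed.

Lemma UB : ~ T1m1_dim_ge p (r * N1 - (r + N1)).+1.
Proof.
move=> [phi [hphi indep]].
have [V HV] := fin_all_exists (fun k => U1all (hphi k)).
have hlt : (\dim (fullv : {vspace 'M[F]_(r, N1)}) - \dim Wsp < (r * N1 - (r + N1)).+1)%N.
  by rewrite dim_M dimW ltnSn.
have [a [[k nz] hW]] := U2 V hlt.
apply: (negP nz); apply/eqP; apply: (indep a).
have [lam [c hlc]] := memW hW.
exists c => q f hf; split.
  apply: homogB.
    by apply: homog_sum => t _; apply: homogZ; have [h1 _] := hphi t; apply: h1.
  by apply: homog_sum => j _; apply: homogZ; apply: homog_deriv; exact: hf.1.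
move=> i; rewrite mevalB /lincomb meval_sumX mevalConstDer.
rewrite (eq_bigr (fun t => a t * Dw (fun j => V t i j) (p i) f)); last first.
  by move=> t _; rewrite mevalZ (HV t q f hf i).
rewrite -Dw_lincomb (Dw_ext _ _ (fun j => hlc i j)) Dw_w.
by rewrite (Euler _ hf.1) (hf.2 i) !mulr0 add0r subrr.
Qed.

End Main.

Lemma arith1 (A B C : nat) :
  absz (Num.max 0%Z (A%:Z - B%:Z - C%:Z)) = (A - B - C)%N.
Proof.
have [h|h] := leP (B + C)%N A.
  rewrite max_r; last by lia.
  lia.
rewrite max_l; last by lia.
lia.
Qed.

Lemma arith2 (R N C1 C2 : nat) : (C1 < R)%N -> (R <= C2)%N ->
  absz (Num.max 0%Z ((N%:Z - 1) * R%:Z - N%:Z - (R%:Z - C1%:Z) * (C2%:Z - R%:Z)))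
  = (R * N - (C2 - R) * (R - C1) - (R + N))%N.
Proof.
move=> h1 h2.
have -> : (N%:Z - 1) * R%:Z - N%:Z - (R%:Z - C1%:Z) * (C2%:Z - R%:Z) =
   (R * N)%N%:Z - ((C2 - R) * (R - C1))%N%:Z - (R + N)%N%:Z.
  rewrite !PoszM -!subzn ?(ltnW h1) // PoszD; ring.
by rewrite arith1.
Qed.

Unset Implicit Arguments.
Set Strict Implicit.

Theorem mainTheorem8 (F : closedFieldType) (hchar : [pchar F] =i pred0)
  (n r : nat) (p : 'I_r -> 'I_n -> F) (d : nat)
  (hpts : distinct_points p) (hgp : general_position p)
  (hd : (2 <= d)%N)
  (hr1 : ('C(n + d - 2, d - 1) < r)%N) (hr2 : (r <= 'C(n + d - 1, d))%N) :
  T1m1_dim_ge p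
    (absz (Num.max 0%Z ((n%:Z - 1) * r%:Z - n%:Z
        - (r%:Z - ('C(n + d - 2, d - 1))%:Z) * (('C(n + d - 1, d))%:Z - r%:Z))))
  /\ (r = 'C(n + d - 1, d) ->
      exists N : nat, T1m1_dim p N /\
        N%:Z = (n%:Z - 1) * ('C(n + d - 1, d))%:Z - n%:Z).
Proof.
case: n p hpts hgp hr1 hr2 => [|n] p hpts hgp hr1 hr2.
  exfalso; move: hr2; rewrite add0n bin_small; last by lia.
  by rewrite leqn0 => /eqP r0; move: hr1; rewrite r0.
have eC1 : 'C(n.+1 + d - 2, d - 1) = C1' n d by rewrite /C1'; congr binomial; lia.
have eC2 : 'C(n.+1 + d - 1, d) = C2' n d by rewrite /C2'; congr binomial; lia.
have hLB := LB hpts hgp hd hr1 hr2.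
have hUB := UB hpts hgp hd hr1 hr2.
split.
  rewrite arith2 //; first by rewrite eC1 eC2.
move=> hr.
have n1 : (0 < n)%N.
  case: n {hLB hUB eC1 eC2} p hpts hgp hr1 hr2 hr => [|n] // p _ _ hr1 hr2 _.
  have e1 : (1 + d - 2 = d - 1)%N by lia.
  have e2 : (1 + d - 1 = d)%N by lia.
  move: hr1 hr2; rewrite e1 e2 !binn.
  by move=> h1 h2; have := leq_ltn_trans h2 h1; rewrite ltnn.
have r2 : (1 < r)%N.
  apply: leq_ltn_trans hr1; rewrite bin_gt0; lia.
exists (r * n.+1 - (r + n.+1))%N; split.
  split => //.
  by move: hLB; rewrite /Nlb -eC2 -hr subnn mul0n subn0.
rewrite -hr -subzn; last by nia.
by rewrite PoszM PoszD; ring.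
Qed.
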